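(* Let $1<\alpha<2$, $h>0$, and let $G:\mathbb{R}\to\mathbb{R}$ be continuous. Let $(x_n)_{n\ge0}$ be a real sequence of one of the following three kinds: (a) (Caputo universal fractional map) for constants $b_0,b_1\in\mathbb{R}$, $$x_{n+1}=b_0+b_1h(n+1)-\frac{h^{\alpha}}{\Gamma(\alpha)}\sum_{k=0}^{n}G(x_k)\,(n-k+1)^{\alpha-1},\quad n\ge0;$$ (b) (Caputo $h$-difference universal map) for constants $c_0,c_1\in\mathbb{R}$, $$x_{n+1}=c_0+c_1h(n+1)-\frac{h^{\alpha}}{\Gamma(\alpha)}\sum_{s=0}^{n-1}\frac{\Gamma(n-s-1+\alpha)}{\Gamma(n-s)}\,G(x_{s+1}),\quad n\ge0;$$ (c) (Riemann–Liouville universal fractional map) for a constant $c_1\in\mathbb{R}$, $$x_{n}=\frac{c_1}{\Gamma(\alpha)}(nh)^{\alpha-1}-\frac{h^{\alpha}}{\Gamma(\alpha)}\sum_{k=0}^{n-1}(n-k)^{\alpha-1}G(x_k),\quad n\ge1.$$ Set $U(n)=n^{\alpha-1}$ in cases (a),(c) and $U(n)=\Gamma(n+\alpha-1)/\Gamma(n)$ in case (b), for $n\ge1$, with $U(0)=0$, and define the convergent series $$\tilde W_\alpha=\sum_{n=1}^{\infty}(-1)^{n+1}\bigl[U(n)-U(n-1)\bigr].$$ Suppose the limits $x_o=\lim_{n\to\infty}x_{2n+1}$ and $x_e=\lim_{n\to\infty}x_{2n}$ exist in $\mathbb{R}$ (an asymptotic period-two sink). Then $$G(x_o)+G(x_e)=0,\qquad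 x_o-x_e=\frac{\tilde W_\alpha}{2\Gamma(\alpha)}\,h^{\alpha}\bigl[G(x_o)-G(x_e)\bigr].$$
   Context: Here $G=G_K$ is the nonlinearity of the map and $\Gamma$ is the gamma function. In case (a) the first sum term at $k=n$ equals $G(x_n)$; in case (b) the kernel is the falling factorial $(n-s-2+\alpha)^{(\alpha-1)}=\Gamma(n-s-1+\alpha)/\Gamma(n-s)$. *)

(* Defs.v *)
From Stdlib Require Import Reals List.
From Coquelicot Require Import Coquelicot.
Open Scope R_scope.

(* Euler Gamma function, for s > 0: Gamma(s) = int_0^oo t^(s-1) e^(-t) dt
   (improper Riemann integral; only used at positive arguments). *)
Definition Gamma (s : R) : R :=
  RInt_gen (fun t => Rpower t (s - 1) * exp (- t)) (at_right 0) (Rbar_locally p_infty).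

Definition fsum (m : nat) (f : nat -> R) : R :=
  fold_right Rplus 0 (map f (seq 0 m)).

Inductive map_kind := CaputoMap | HDiffMap | RLMap.

Definition caputo_map (alpha h b0 b1 : R) (G : R -> R) (x : nat -> R) : Prop :=
  forall n : nat,
    x (S n) = b0 + b1 * h * INR (S n)
      - Rpower h alpha / Gamma alpha
        * fsum (S n) (fun k => G (x k) * Rpower (INR (n - k + 1)) (alpha - 1)).

Definition hdiff_map (alpha h c0 c1 : R) (G : R -> R) (x : nat -> R) : Prop :=
  forall n : nat,
    x (S n) = c0 + c1 * h * INR (S n)
      - Rpower h alpha / Gamma alpha
        * fsum n (fun s => Gamma (INR (n - s) - 1 + alpha) / Gamma (INR (n - s))
                            * G (x (S s))).

Definition rl_map (alpha h c1 : R) (G : R -> R) (x : nat -> R) : Prop :=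
  forall n : nat, (1 <= n)%nat ->
    x n = c1 / Gamma alpha * Rpower (INR n * h) (alpha - 1)
      - Rpower h alpha / Gamma alpha
        * fsum n (fun k => Rpower (INR (n - k)) (alpha - 1) * G (x k)).

Definition is_universal_map (K : map_kind) (alpha h : R) (G : R -> R)
    (x : nat -> R) : Prop :=
  match K with
  | CaputoMap => exists b0 b1, caputo_map alpha h b0 b1 G x
  | HDiffMap => exists c0 c1, hdiff_map alpha h c0 c1 G x
  | RLMap => exists c1, rl_map alpha h c1 G x
  end.

Definition U (K : map_kind) (alpha : R) (n : nat) : R :=
  match n with
  | O => 0
  | S _ =>
    match K with
    | HDiffMap => Gamma (INR n + alpha - 1) / Gamma (INR n)
    | _ => Rpower (INR n) (alpha - 1)
    end
  end.

(* W~_alpha = sum_{n>=1} (-1)^(n+1) [U(n) - U(n-1)], reindexed with n = m+1. *)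
Definition W_tilde (K : map_kind) (alpha : R) : R :=
  Series (fun m : nat => (-1) ^ (m + 2) * (U K alpha (S m) - U K alpha m)).

(* Main.v *)
Require Import Defs.
From Stdlib Require Import Reals Lra Lia List.
From Coquelicot Require Import Coquelicot.
Open Scope R_scope.

Definition fs (s t : R) := Rpower t (s - 1) * exp (- t).

Lemma at_right_lt (a0 : R) : 0 < a0 -> at_right 0 (fun a => 0 < a < a0).
Proof.
  intros H. exists (mkposreal a0 H). intros y Hy Hp. split; auto.
  unfold ball in Hy; simpl in Hy. unfold AbsRing_ball, abs, minus, plus, opp in Hy; simpl in Hy.
  apply Rabs_lt_between in Hy. lra.
Qed.

Lemma fp_box (a0 b0 : R) : 0 < a0 ->
  filter_prod (at_right 0) (Rbar_locally p_infty)
    (fun ab => 0 < fst ab < a0 /\ b0 < snd ab).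
Proof.
  intros H. exists (fun a => 0 < a < a0) (fun b => b0 < b).
  - apply at_right_lt; auto.
  - exists b0. auto.
  - intros a b Ha Hb. simpl. auto.
Qed.

Lemma cont_dlim f x l : derivable_pt_lim f x l -> continuity_pt f x.
Proof. intros H. apply derivable_continuous_pt. exists l. exact H. Qed.

Lemma rp_contpt (s t : R) : 0 < t -> continuity_pt (fun t => Rpower t s) t.
Proof. intros H. eapply cont_dlim. apply derivable_pt_lim_power; auto. Qed.

Lemma expm_contpt t : continuity_pt (fun t => exp (- t)) t.
Proof.
  apply (continuity_pt_comp (fun t => - t) exp). apply continuity_pt_opp, continuity_pt_id.
  apply derivable_continuous_pt, derivable_pt_exp.
Qed.

Lemma fs_cont (s t : R) : 0 < t -> continuous (fs s) t.
Proof.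
  intros H. apply continuity_pt_filterlim. unfold fs.
  apply (continuity_pt_mult (fun t => Rpower t (s-1)) (fun t => exp (-t))).
  apply rp_contpt; auto. apply expm_contpt.
Qed.

Lemma fs_exRInt (s a b : R) : 0 < a -> 0 < b -> ex_RInt (fs s) a b.
Proof.
  intros Ha Hb. apply (ex_RInt_continuous (V:=R_CompleteNormedModule)). intros z Hz. apply fs_cont.
  assert (0 < Rmin a b) by (apply Rmin_glb_lt; auto). lra.
Qed.

Lemma fs_pos (s t : R) : 0 < t -> 0 < fs s t.
Proof. intros. unfold fs, Rpower. apply Rmult_lt_0_compat; apply exp_pos. Qed.

Lemma exp_le x y : x <= y -> exp x <= exp y.
Proof. intros [H|H]. left; apply exp_increasing; auto. subst; lra. Qed.

Lemma rp_le1 (y t : R) : 0 <= y -> 0 < t <= 1 -> Rpower t y <= 1.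
Proof.
  intros Hy Ht. unfold Rpower. rewrite <- exp_0. apply exp_le.
  assert (ln t <= 0) by (rewrite <- ln_1; apply ln_le; lra). nra.
Qed.

Lemma rp_let (y t : R) : y <= 1 -> 1 <= t -> Rpower t y <= t.
Proof.
  intros Hy Ht. rewrite <- (Rpower_1 t) at 2 by lra. unfold Rpower. apply exp_le.
  assert (0 <= ln t) by (rewrite <- ln_1; apply ln_le; lra). nra.
Qed.

Lemma rp_ge1 (y t : R) : 0 <= y -> 1 <= t -> 1 <= Rpower t y.
Proof.
  intros Hy Ht. unfold Rpower. rewrite <- exp_0. apply exp_le.
  assert (0 <= ln t) by (rewrite <- ln_1; apply ln_le; lra). nra.
Qed.

Definition gb (t : R) := (1 + t) * exp (- t).

Lemma gb_RInt a b : RInt gb a b = (2 + a) * exp (- a) - (2 + b) * exp (- b).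
Proof.
  apply is_RInt_unique.
  replace ((2 + a) * exp (- a) - (2 + b) * exp (- b)) with
    ((fun t => - ((2 + t) * exp (- t))) b - (fun t => - ((2 + t) * exp (- t))) a) by (simpl; ring).
  apply (is_RInt_derive (fun t => - ((2 + t) * exp (- t))) gb).
  - intros x _. unfold gb. auto_derive; auto. ring.
  - intros x _. apply continuity_pt_filterlim. unfold gb.
    apply (continuity_pt_mult (fun t => 1 + t) (fun t => exp (-t))).
    apply continuity_pt_plus. apply continuity_pt_const; intros ? ?; auto. apply continuity_pt_id.
    apply expm_contpt.
Qed.

Lemma fs_bound (s a b : R) : 1 <= s < 2 -> 0 < a <= b -> RInt (fs s) a b <= 2.
Proof.
  intros Hs Hab. apply Rle_trans with (RInt gb a b).
  - apply RInt_le. lra. apply fs_exRInt; lra.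
    apply (ex_RInt_continuous (V:=R_CompleteNormedModule)). intros z _. apply continuity_pt_filterlim. unfold gb.
    apply (continuity_pt_mult (fun t => 1 + t) (fun t => exp (-t))).
    apply continuity_pt_plus. apply continuity_pt_const; intros ? ?; auto. apply continuity_pt_id.
    apply expm_contpt.
    intros t Ht. unfold fs, gb. apply Rmult_le_compat_r. left; apply exp_pos.
    destruct (Rle_dec t 1).
    + pose proof (rp_le1 (s-1) t). lra.
    + pose proof (rp_let (s-1) t). lra.
  - rewrite gb_RInt. assert (0 < (2 + b) * exp (- b)) by (apply Rmult_lt_0_compat; [lra| apply exp_pos]).
    assert ((2 + a) * exp (- a) <= 2); [|lra].
    pose proof (exp_pos a). assert (1 + a <= exp a) by (apply exp_ineq1_le).
    rewrite exp_Ropp. apply (Rmult_le_reg_r (exp a)); auto.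
    rewrite Rmult_assoc, Rinv_l by lra. lra.
Qed.

Lemma ballR (l e y : R) : Rabs (y - l) < e -> ball l e y.
Proof. intros H. unfold ball; simpl. unfold AbsRing_ball, abs, minus, plus, opp; simpl. exact H. Qed.

Lemma fs_gen_ex s : 1 <= s < 2 -> exists L, 0 < L /\ is_RInt_gen (fs s) (at_right 0) (Rbar_locally p_infty) L.
Proof.
  intros Hs.
  set (E := fun y => exists a b, 0 < a <= b /\ y = RInt (fs s) a b).
  assert (HB : bound E). { exists 2. intros y [a [b [Hab ->]]]. apply fs_bound; auto. }
  assert (HN : exists y, E y). { exists (RInt (fs s) 1 2). exists 1, 2. split; auto; lra. }
  destruct (completeness E HB HN) as [l [Hub Hlub]].
  assert (Hpos: 0 < RInt (fs s) 1 2).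
  { apply RInt_gt_0. lra. intros; apply fs_pos; lra. intros; apply fs_cont; lra. }
  exists l. split.
  { apply Rlt_le_trans with (RInt (fs s) 1 2); auto. apply Hub. exists 1, 2. split; auto; lra. }
  unfold is_RInt_gen, filterlimi, filter_le, filtermapi.
  intros P [eps Heps].
  assert (Hex : exists a0 b0, 0 < a0 <= b0 /\ l - eps < RInt (fs s) a0 b0).
  { apply Classical_Prop.NNPP. intros Hn.
    assert (l <= l - eps); [|destruct eps; simpl in *; lra].
    apply Hlub. intros y [a [b [Hab ->]]]. apply Rnot_lt_le. intros Hc. apply Hn. exists a, b; auto. }
  destruct Hex as [a0 [b0 [Hab0 Hl0]]].
  eapply filter_imp; [| apply (fp_box a0 b0); lra].
  intros [a b] [Ha Hb]; simpl in *.
  exists (RInt (fs s) a b). split.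
  { apply (RInt_correct (V:=R_CompleteNormedModule)). apply fs_exRInt; lra. }
  apply Heps. apply ballR.
  assert (RInt (fs s) a b <= l) by (apply Hub; exists a, b; split; auto; lra).
  assert (RInt (fs s) a0 b0 <= RInt (fs s) a b).
  { rewrite <- (RInt_Chasles (fs s) a a0 b) by (apply fs_exRInt; lra).
    rewrite <- (RInt_Chasles (fs s) a0 b0 b) by (apply fs_exRInt; lra).
    assert (0 <= RInt (fs s) a a0). { apply RInt_ge_0. lra. apply fs_exRInt; lra. intros; left; apply fs_pos; lra. }
    assert (0 <= RInt (fs s) b0 b). { apply RInt_ge_0. lra. apply fs_exRInt; lra. intros; left; apply fs_pos; lra. }
    unfold plus; simpl. lra. }
  apply Rabs_lt_between. lra.
Qed.

Definition Fb (s t : R) := - (Rpower t s * exp (- t)).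

Lemma Fb_lim0 s : 0 < s -> filterlim (Fb s) (at_right 0) (locally 0).
Proof.
  intros Hs P [eps He].
  unfold filtermap.
  assert (Hd : 0 < Rpower eps (/ s)) by (unfold Rpower; apply exp_pos).
  eapply filter_imp; [|apply (at_right_lt _ Hd)].
  intros t Ht. apply He. apply ballR.
  unfold Fb. rewrite Rminus_0_r, Rabs_Ropp.
  assert (H1 : Rpower t s < eps).
  { assert (Ee : Rpower (Rpower eps (/ s)) s = eps).
    { rewrite Rpower_mult. rewrite Rinv_l by lra. apply Rpower_1. destruct eps; simpl; lra. }
    rewrite <- Ee. apply Rlt_Rpower_l; auto; lra. }
  assert (0 < Rpower t s) by (unfold Rpower; apply exp_pos).
  assert (exp (- t) <= 1) by (rewrite <- exp_0; apply exp_le; lra).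
  pose proof (exp_pos (-t)).
  rewrite Rabs_right by (apply Rle_ge; apply Rmult_le_pos; lra).
  nra.
Qed.

Lemma Fb_liminf s : 0 < s -> filterlim (Fb s) (Rbar_locally p_infty) (locally 0).
Proof.
  intros Hs.
  assert (H1 : is_lim (fun t => s * (ln t / t) - 1) p_infty (s * 0 - 1)).
  { apply (is_lim_minus _ _ _ (Finite (s*0)) (Finite 1)).
    apply (is_lim_scal_l _ s _ (Finite 0)). apply is_lim_div_ln_p. apply is_lim_const.
    simpl. reflexivity. }
  assert (H2 : is_lim (fun t => t * (s * (ln t / t) - 1)) p_infty m_infty).
  { replace m_infty with (Rbar_mult p_infty (s*0-1)).
    apply is_lim_mult. apply is_lim_id. exact H1. simpl. 
    unfold ex_Rbar_mult. replace (s*0-1) with (-1) by ring. lra.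
    simpl. replace (s*0-1) with (-1) by ring. unfold Rbar_mult, Rbar_mult'.
    destruct (Rle_dec 0 (-1)); try lra. destruct (Rle_lt_or_eq_dec 0 (-1) r); lra. 
    auto. }
  assert (H3 : is_lim (fun t => exp (t * (s * (ln t / t) - 1))) p_infty 0).
  { eapply is_lim_comp. apply is_lim_exp_m. exact H2. exists 0. intros; discriminate. }
  assert (H4 : is_lim (Fb s) p_infty 0).
  { apply (is_lim_ext_loc (fun t => - exp (t * (s * (ln t / t) - 1)))).
    exists 0. intros t Ht. unfold Fb, Rpower. rewrite <- exp_plus. f_equal. f_equal. field. lra.
    replace (Finite 0) with (Rbar_opp 0) by (simpl; f_equal; ring).
    apply is_lim_opp. exact H3. }
  exact H4.
Qed.

Lemma locally_pos x : 0 < x -> locally x (fun y => 0 < y).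
Proof.
  intros H. exists (mkposreal x H). intros y Hy.
  unfold ball in Hy; simpl in Hy. unfold AbsRing_ball, abs, minus, plus, opp in Hy; simpl in Hy.
  apply Rabs_lt_between in Hy. lra.
Qed.

Lemma Fb_derive s t : 0 < t -> is_derive (Fb s) t (fs (s + 1) t - s * fs s t).
Proof.
  intros Ht. unfold Fb, fs.
  replace (s + 1 - 1) with s by ring.
  apply is_derive_Reals.
  replace (Rpower t s * exp (- t) - s * (Rpower t (s - 1) * exp (- t)))
    with (- ((s * Rpower t (s - 1)) * exp (- t) + Rpower t s * (- exp (- t)))) by ring.
  apply derivable_pt_lim_opp.
  apply (derivable_pt_lim_mult (fun t => Rpower t s) (fun t => exp (- t))).
  apply derivable_pt_lim_power; auto.
  apply is_derive_Reals. auto_derive; auto. ring.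
Qed.

Lemma fs_rec s L : 0 < s -> is_RInt_gen (fs s) (at_right 0) (Rbar_locally p_infty) L ->
  is_RInt_gen (fs (s + 1)) (at_right 0) (Rbar_locally p_infty) (s * L).
Proof.
  intros Hs HL.
  assert (HD : forall t, 0 < t -> Derive (Fb s) t = fs (s + 1) t - s * fs s t).
  { intros t Ht. apply is_derive_unique. apply Fb_derive; auto. }
  assert (Hbox : filter_prod (at_right 0) (Rbar_locally p_infty) (fun ab => 0 < fst ab < 1 /\ 0 < snd ab)).
  { apply fp_box; lra. }
  assert (H1 : is_RInt_gen (Derive (Fb s)) (at_right 0) (Rbar_locally p_infty) (0 - 0)).
  { apply is_RInt_gen_Derive.
    - eapply filter_imp; [|exact Hbox]. intros [a b] [Ha Hb] x Hx; simpl in *.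
      assert (0 < Rmin a b) by (apply Rmin_glb_lt; lra).
      eexists. apply Fb_derive. lra.
    - eapply filter_imp; [|exact Hbox]. intros [a b] [Ha Hb] x Hx; simpl in *.
      assert (0 < Rmin a b) by (apply Rmin_glb_lt; lra).
      apply (continuous_ext_loc _ (fun t => fs (s + 1) t - s * fs s t)).
      + eapply filter_imp; [|apply (locally_pos x); lra]. intros y Hy. rewrite HD; auto.
      + apply continuity_pt_filterlim. apply continuity_pt_minus.
        apply continuity_pt_filterlim. apply fs_cont; lra.
        apply continuity_pt_scal. apply continuity_pt_filterlim. apply fs_cont; lra.
    - apply Fb_lim0; auto.
    - apply Fb_liminf; auto. }
  assert (H2 := is_RInt_gen_scal _ s _ HL).
  assert (H3 := is_RInt_gen_plus _ _ _ _ H1 H2).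
  replace (s * L) with (plus (0 - 0) (scal s L)) by (unfold plus, scal; simpl; unfold mult; simpl; ring).
  eapply is_RInt_gen_ext; [| exact H3].
  eapply filter_imp; [|exact Hbox]. intros [a b] [Ha Hb] x Hx; simpl in *.
  assert (0 < Rmin a b) by (apply Rmin_glb_lt; lra).
  rewrite HD by lra. unfold plus, scal; simpl; unfold mult; simpl. ring.
Qed.

Lemma Gamma_chain s : 1 <= s < 2 -> forall k, exists L, 0 < L /\
  is_RInt_gen (fs (s + INR k)) (at_right 0) (Rbar_locally p_infty) L.
Proof.
  intros Hs k. induction k.
  - simpl. rewrite Rplus_0_r. apply fs_gen_ex; auto.
  - destruct IHk as [L [HL HI]]. pose proof (pos_INR k).
    exists ((s + INR k) * L). split. apply Rmult_lt_0_compat; lra.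
    rewrite S_INR. rewrite <- Rplus_assoc. apply fs_rec; auto. lra.
Qed.

Lemma Gamma_is s L : is_RInt_gen (fs s) (at_right 0) (Rbar_locally p_infty) L -> Gamma s = L.
Proof. intros H. unfold Gamma. apply (is_RInt_gen_unique (V:=R_CompleteNormedModule)). exact H. Qed.

Lemma Gamma_pos s k : 1 <= s < 2 -> 0 < Gamma (s + INR k).
Proof. intros Hs. destruct (Gamma_chain s Hs k) as [L [HL HI]]. rewrite (Gamma_is _ _ HI). auto. Qed.

Lemma Gamma_rec s k : 1 <= s < 2 -> Gamma (s + INR (S k)) = (s + INR k) * Gamma (s + INR k).
Proof.
  intros Hs. destruct (Gamma_chain s Hs k) as [L [HL HI]]. pose proof (pos_INR k).
  rewrite (Gamma_is _ _ HI). apply Gamma_is. rewrite S_INR, <- Rplus_assoc. apply fs_rec; auto. lra.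
Qed.

Lemma sum_shift f n : sum_f_R0 f (S n) = f 0%nat + sum_f_R0 (fun k => f (S k)) n.
Proof.
  induction n.
  - simpl. ring.
  - rewrite tech5, IHn, tech5. ring.
Qed.

Lemma sum_rev f n : sum_f_R0 f n = sum_f_R0 (fun k => f (n - k)%nat) n.
Proof.
  induction n.
  - simpl. auto.
  - rewrite tech5, IHn. rewrite (sum_shift (fun k => f (S n - k)%nat)).
    simpl. ring.
Qed.

Definition conv (w g : nat -> R) (n : nat) := sum_f_R0 (fun j => w j * g (n - j)%nat) n.
Definition dif (w : nat -> R) (j : nat) := match j with O => w O | S i => w (S i) - w i end.

Lemma conv_S w g n : conv w g (S n) = w 0%nat * g (S n) + sum_f_R0 (fun j => w (S j) * g (n - j)%nat) n.
Proof. unfold conv. rewrite sum_shift. simpl. reflexivity. Qed.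

Lemma conv_diff w g n : conv w g (S n) - conv w g n = conv (dif w) g (S n).
Proof.
  rewrite !conv_S. unfold conv. simpl.
  replace (sum_f_R0 (fun j => (w (S j) - w j) * g (n - j)%nat) n) with
    (sum_f_R0 (fun j => w (S j) * g (n - j)%nat) n - sum_f_R0 (fun j => w j * g (n - j)%nat) n).
  ring.
  rewrite <- minus_sum. apply sum_eq. intros; ring.
Qed.

Lemma conv_ext w w' g n : (forall j, w j = w' j) -> conv w g n = conv w' g n.
Proof. intros H. unfold conv. apply sum_eq. intros. rewrite H. auto. Qed.

Lemma conv_ext_g w g g' n : (forall j, g j = g' j) -> conv w g n = conv w g' n.
Proof. intros H. unfold conv. apply sum_eq. intros. rewrite H. auto. Qed.

Lemma conv_plus w g g' n : conv w (fun k => g k + g' k) n = conv w g n + conv w g' n.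
Proof. unfold conv. rewrite <- plus_sum. apply sum_eq. intros; ring. Qed.

Lemma noninc_gen (d : nat -> R) : (forall j, d (S j) <= d j) -> forall i j, (i <= j)%nat -> d j <= d i.
Proof.
  intros H i j Hij. induction Hij. lra. specialize (H m). lra.
Qed.

Lemma noninc_nonneg (d : nat -> R) : (forall j, d (S j) <= d j) -> Un_cv d 0 -> forall j, 0 <= d j.
Proof.
  intros H Hl j. apply Rnot_lt_le. intros Hn.
  destruct (Hl (- d j)) as [N HN]. lra.
  specialize (HN (max N j) (Nat.le_max_l N j)).
  pose proof (noninc_gen d H j (max N j) (Nat.le_max_r N j)).
  unfold R_dist in HN. rewrite Rminus_0_r in HN. apply Rabs_def2 in HN. lra.
Qed.

Lemma sum_mono (f : nat -> R) m p : (forall k, 0 <= f k) -> (m <= p)%nat -> sum_f_R0 f m <= sum_f_R0 f p.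
Proof. intros H0 Hmp. induction Hmp. lra. rewrite tech5. specialize (H0 (S m0)). lra. Qed.

Lemma sum_nonneg_le (f : nat -> R) K n : (forall k, 0 <= f k) -> (forall k, (K <= k)%nat -> f k = 0) ->
  sum_f_R0 f n <= sum_f_R0 f K.
Proof.
  intros H0 HK. induction n.
  - apply sum_mono; auto; lia.
  - rewrite tech5. destruct (Compare_dec.le_lt_dec K (S n)) as [Hle|Hlt].
    + rewrite (HK (S n) Hle). lra.
    + rewrite <- tech5. apply sum_mono; auto; lia.
Qed.

Lemma core1 (d s : nat -> R) D M B N1 :
  (forall j, 0 <= d j) -> (forall j, d j <= D) ->
  (forall Y, exists N, forall n, (N <= n)%nat -> Y <= sum_f_R0 d n) ->
  Un_cv s M ->
  (forall n, (N1 <= n)%nat -> sum_f_R0 (fun j => d j * s (n - j)%nat) n <= B) ->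
  M <= 0.
Proof.
  intros Hd0 HdD Hun Hs HB. apply Rnot_lt_le. intros HM.
  destruct (Hs (M/2)) as [K HK]. lra.
  set (phi := fun k => Rmax 0 (M/2 - s k)).
  assert (Hphi0 : forall k, 0 <= phi k) by (intros; apply Rmax_l).
  assert (HphiK : forall k, (K <= k)%nat -> phi k = 0).
  { intros k Hk. unfold phi. apply Rmax_left. specialize (HK k Hk). unfold R_dist in HK.
    apply Rabs_def2 in HK. lra. }
  set (C := sum_f_R0 phi K).
  assert (HD : 0 <= D) by (specialize (Hd0 0%nat); specialize (HdD 0%nat); lra).
  assert (Hlow : forall n, M/2 * sum_f_R0 d n - D * C <= sum_f_R0 (fun j => d j * s (n - j)%nat) n).
  { intros n.
    assert (H1 : sum_f_R0 (fun j => d j * (M/2) - D * phi (n - j)%nat) n <=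
                 sum_f_R0 (fun j => d j * s (n - j)%nat) n).
    { apply sum_Rle. intros j _. 
      assert (s (n-j)%nat >= M/2 - phi (n-j)%nat).
      { unfold phi. pose proof (Rmax_r 0 (M/2 - s (n-j)%nat)). lra. }
      specialize (Hd0 j). specialize (HdD j). specialize (Hphi0 (n-j)%nat). nra. }
    rewrite minus_sum in H1. rewrite <- (sum_rev (fun k => D * phi k)) in H1.
    assert (E1 : sum_f_R0 (fun j => d j * (M / 2)) n = M/2 * sum_f_R0 d n) by (rewrite scal_sum; auto).
    assert (E2 : sum_f_R0 (fun k => D * phi k) n = D * sum_f_R0 phi n)
      by (rewrite scal_sum; apply sum_eq; intros; ring).
    rewrite E1, E2 in H1.
    assert (sum_f_R0 phi n <= C) by (apply sum_nonneg_le; auto).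
    rewrite Rmult_comm. nra. }
  destruct (Hun ((B + D * C + 1) * 2 / M)) as [N HN].
  specialize (HN (max N N1) (Nat.le_max_l _ _)).
  specialize (HB (max N N1) (Nat.le_max_r _ _)).
  specialize (Hlow (max N N1)).
  assert (M / 2 * ((B + D * C + 1) * 2 / M) = B + D * C + 1) by (field; lra).
  assert (M / 2 * ((B + D * C + 1) * 2 / M) <= M/2 * sum_f_R0 d (max N N1)) by (apply Rmult_le_compat_l; lra).
  lra.
Qed.

Lemma abs_dif_sum (d : nat -> R) : (forall j, d (S j) <= d j) -> (forall j, 0 <= d j) ->
  forall n, sum_f_R0 (fun j => Rabs (dif d j)) n = 2 * d 0%nat - d n.
Proof.
  intros Hm H0 n. induction n.
  - simpl. rewrite Rabs_right by (specialize (H0 0%nat); lra). ring.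
  - rewrite tech5, IHn. simpl. rewrite Rabs_left1 by (specialize (Hm n); lra). ring.
Qed.

Lemma toep (d e : nat -> R) : (forall j, d (S j) <= d j) -> Un_cv d 0 -> Un_cv e 0 ->
  Un_cv (conv (dif d) e) 0.
Proof.
  intros Hm Hd He.
  assert (H0 := noninc_nonneg d Hm Hd).
  assert (Hg := noninc_gen d Hm).
  intros eps Heps.
  set (eta := eps / (4 * d 0%nat + 4)).
  assert (Hd00 := H0 0%nat).
  assert (Heta : 0 < eta) by (unfold eta; apply Rdiv_lt_0_compat; lra).
  destruct (He eta Heta) as [K HK].
  set (psi := fun k => Rmax 0 (Rabs (e k) - eta)).
  assert (Hpsi0 : forall k, 0 <= psi k) by (intros; apply Rmax_l).
  assert (HpsiK : forall k, (K <= k)%nat -> psi k = 0).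
  { intros k Hk. unfold psi. apply Rmax_left. specialize (HK k Hk). unfold R_dist in HK.
    rewrite Rminus_0_r in HK. lra. }
  assert (Hpsi : forall k, Rabs (e k) <= eta + psi k).
  { intros k. unfold psi. pose proof (Rmax_r 0 (Rabs (e k) - eta)). lra. }
  set (C := sum_f_R0 psi K).
  assert (HC : forall n, sum_f_R0 psi n <= C) by (intros; apply sum_nonneg_le; auto).
  assert (HC0 : 0 <= C) by (apply cond_pos_sum; auto).
  destruct (Hd (eps / 2 / (C + 1))) as [N2 HN2].
  { apply Rdiv_lt_0_compat; lra. }
  exists (K + N2)%nat. intros n Hn. unfold R_dist. rewrite Rminus_0_r.
  assert (Hb : forall j, (j <= n)%nat -> Rabs (dif d j * e (n - j)%nat) <=
                     Rabs (dif d j) * eta + d (n - K)%nat * psi (n - j)%nat).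
  { intros j Hj. rewrite Rabs_mult.
    assert (Rabs (dif d j) * psi (n - j)%nat <= d (n - K)%nat * psi (n - j)%nat).
    { destruct (Compare_dec.le_lt_dec K (n - j)) as [HKj|HKj].
      - rewrite HpsiK by auto. lra.
      - destruct j as [|i]. { rewrite Nat.sub_0_r in HKj. lia. }
        simpl. rewrite Rabs_left1 by (specialize (Hm i); lra).
        apply Rmult_le_compat_r; auto.
        specialize (Hg (n - K)%nat i ltac:(lia)). specialize (H0 (S i)). lra. }
    specialize (Hpsi (n - j)%nat). pose proof (Rabs_pos (dif d j)). nra. }
  unfold conv.
  eapply Rle_lt_trans. apply Rsum_abs.
  eapply Rle_lt_trans. apply sum_Rle. exact Hb.
  rewrite plus_sum.
  assert (E1 : sum_f_R0 (fun j => Rabs (dif d j) * eta) n = eta * (2 * d 0%nat - d n)).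
  { rewrite <- abs_dif_sum with (n := n) by auto. rewrite scal_sum. auto. }
  assert (E2 : sum_f_R0 (fun j => d (n - K)%nat * psi (n - j)%nat) n = d (n - K)%nat * sum_f_R0 psi n).
  { rewrite (sum_rev psi n). rewrite scal_sum. apply sum_eq. intros; ring. }
  rewrite E1, E2.
  specialize (HN2 (n - K)%nat ltac:(lia)). unfold R_dist in HN2. rewrite Rminus_0_r in HN2.
  assert (HdnK := H0 (n - K)%nat). rewrite Rabs_right in HN2 by lra.
  specialize (HC n). specialize (H0 n).
  assert (d (n - K)%nat * sum_f_R0 psi n <= eps / 2 / (C + 1) * C).
  { apply Rle_trans with (d (n - K)%nat * C). apply Rmult_le_compat_l; lra.
    apply Rmult_le_compat_r; lra. }
  assert (eps / 2 / (C + 1) * C < eps / 2).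
  { unfold Rdiv. rewrite Rmult_assoc. 
    assert (/ (C + 1) * C < 1). { apply (Rmult_lt_reg_l (C+1)). lra. field_simplify; lra. }
    nra. }
  assert (eta * (2 * d 0%nat - d n) <= eps / 2).
  { unfold eta. apply Rle_trans with (eps / (4 * d 0%nat + 4) * (2 * d 0%nat + 2)).
    apply Rmult_le_compat_l. left; apply Rdiv_lt_0_compat; lra. lra.
    right. field. lra. }
  lra.
Qed.

Lemma cv_ext (u v : nat -> R) l : (forall n, u n = v n) -> Un_cv u l -> Un_cv v l.
Proof. intros H Hu e He. destruct (Hu e He) as [N HN]. exists N. intros n Hn. rewrite <- H. auto. Qed.

Lemma cv_const c : Un_cv (fun _ => c) c.
Proof. intros e He. exists 0%nat. intros. unfold R_dist. rewrite Rminus_eq_0, Rabs_R0. auto. Qed.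

Lemma cv_sub (u : nat -> R) (phi : nat -> nat) l : (forall n, (n <= phi n)%nat) -> Un_cv u l -> Un_cv (fun n => u (phi n)) l.
Proof. intros H Hu e He. destruct (Hu e He) as [N HN]. exists N. intros n Hn. apply HN. specialize (H n). lia. Qed.

Lemma cv_parity (u : nat -> R) l : Un_cv (fun m => u (2 * m)%nat) l -> Un_cv (fun m => u (2 * m + 1)%nat) l -> Un_cv u l.
Proof.
  intros He Ho e Hep. destruct (He e Hep) as [N1 H1]. destruct (Ho e Hep) as [N2 H2].
  exists (2 * N1 + 2 * N2 + 1)%nat. intros n Hn.
  destruct (Nat.Even_or_Odd n) as [[k Hk]|[k Hk]]; subst n.
  - apply H1. lia.
  - apply H2. lia.
Qed.

Lemma pm1_sq j : (-1) ^ j * (-1) ^ j = 1.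
Proof. rewrite <- pow_add. replace (j + j)%nat with (2 * j)%nat by lia. rewrite pow_mult. 
  replace ((-1) ^ 2) with 1 by ring. apply pow1. Qed.

Lemma pm1_even m : (-1) ^ (2 * m) = 1.
Proof. rewrite pow_mult. replace ((-1) ^ 2) with 1 by ring. apply pow1. Qed.

Lemma pm1_odd m : (-1) ^ (2 * m + 1) = -1.
Proof. rewrite pow_add, pm1_even. ring. Qed.

Lemma pm1_sub N j : (j <= N)%nat -> (-1) ^ N = 1 -> (-1) ^ (N - j) = (-1) ^ j.
Proof.
  intros Hj HN. assert (E : (-1) ^ (N - j) * (-1) ^ j = 1).
  { rewrite <- pow_add. replace (N - j + j)%nat with N by lia. auto. }
  pose proof (pm1_sq j).
  replace ((-1) ^ (N - j)) with ((-1) ^ (N - j) * ((-1) ^ j * (-1) ^ j)) by (rewrite H; ring).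
  rewrite <- Rmult_assoc, E. ring.
Qed.

Lemma sum_dif (d : nat -> R) n : sum_f_R0 (dif d) n = d n.
Proof. induction n. simpl; auto. rewrite tech5, IHn. simpl. ring. Qed.

Lemma sum_alt_dif (d : nat -> R) n :
  sum_f_R0 (fun j => (-1) ^ j * dif d j) (S n) = sum_f_R0 (tg_alt d) (S n) + sum_f_R0 (tg_alt d) n.
Proof.
  induction n.
  - simpl. unfold tg_alt. simpl. ring.
  - rewrite tech5, IHn. rewrite (tech5 (tg_alt d) (S n)). rewrite (tech5 (tg_alt d) n).
    unfold tg_alt. simpl. ring.
Qed.

Lemma core2 (d g : nat -> R) Go Ge W :
  (forall j, d (S j) <= d j) -> Un_cv d 0 ->
  Un_cv (fun m => g (2 * m + 1)%nat) Go -> Un_cv (fun m => g (2 * m)%nat) Ge ->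
  Un_cv (sum_f_R0 (tg_alt d)) W ->
  Un_cv (fun m => conv (dif d) g (2 * m + 2)%nat) ((Ge - Go) * W).
Proof.
  intros Hm Hd Ho He HW.
  set (gs := fun k => (Go + Ge) / 2 + (-1) ^ k * ((Ge - Go) / 2)).
  set (e := fun k => g k - gs k).
  assert (Hecv : Un_cv e 0).
  { apply cv_parity.
    - apply (cv_ext (fun m => g (2 * m)%nat - Ge)).
      { intros m. unfold e, gs. rewrite pm1_even. field. }
      replace 0 with (Ge - Ge) by ring. apply CV_minus; auto. apply cv_const.
    - apply (cv_ext (fun m => g (2 * m + 1)%nat - Go)).
      { intros m. unfold e, gs. rewrite pm1_odd. field. }
      replace 0 with (Go - Go) by ring. apply CV_minus; auto. apply cv_const. }
  assert (Ht := toep d e Hm Hd Hecv).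
  assert (Hsplit : forall m, conv (dif d) g (2 * m + 2)%nat =
     (Go + Ge) / 2 * d (2 * m + 2)%nat
     + (Ge - Go) / 2 * (sum_f_R0 (tg_alt d) (2 * m + 2)%nat + sum_f_R0 (tg_alt d) (2 * m + 1)%nat)
     + conv (dif d) e (2 * m + 2)%nat).
  { intros m.
    rewrite (conv_ext_g (dif d) g (fun k => gs k + e k)) by (intros; unfold e; ring).
    rewrite conv_plus.
    assert (E : sum_f_R0 (tg_alt d) (2 * m + 2)%nat + sum_f_R0 (tg_alt d) (2 * m + 1)%nat
              = sum_f_R0 (fun j => (-1) ^ j * dif d j) (2 * m + 2)%nat).
    { replace (2 * m + 2)%nat with (S (2 * m + 1)) by lia. rewrite sum_alt_dif. reflexivity. }
    rewrite E.
    rewrite <- (sum_dif d (2 * m + 2)%nat).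
    unfold conv at 1. unfold gs.
    rewrite scal_sum. rewrite scal_sum.
    rewrite <- plus_sum. apply Rplus_eq_compat_r. apply sum_eq. intros j Hj.
    assert (HN : (-1) ^ (2 * m + 2) = 1).
    { replace (2 * m + 2)%nat with (2 * (m + 1))%nat by lia. apply pm1_even. }
    rewrite (pm1_sub _ j Hj HN). ring. }
  eapply cv_ext. { intros m. symmetry. apply Hsplit. }
  replace ((Ge - Go) * W) with ((Go + Ge) / 2 * 0 + (Ge - Go) / 2 * (W + W) + 0) by field.
  apply CV_plus. apply CV_plus.
  - apply CV_mult. apply cv_const. apply (cv_sub d (fun m => 2 * m + 2)%nat); auto. intros; lia.
  - apply CV_mult. apply cv_const. apply CV_plus.
    + apply (cv_sub _ (fun m => 2 * m + 2)%nat); auto. intros; lia.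
    + apply (cv_sub _ (fun m => 2 * m + 1)%nat); auto. intros; lia.
  - apply (cv_sub _ (fun m => 2 * m + 2)%nat); auto. intros; lia.
Qed.

Lemma ev_bound (u : nat -> R) l1 l2 : Un_cv (fun m => u (2 * m + 1)%nat) l1 -> Un_cv (fun m => u (2 * m)%nat) l2 ->
  exists N B, forall n, (N <= n)%nat -> Rabs (u n) <= B.
Proof.
  intros Ho He. destruct (Ho 1 Rlt_0_1) as [N1 H1]. destruct (He 1 Rlt_0_1) as [N2 H2].
  exists (2 * N1 + 2 * N2)%nat, (Rabs l1 + Rabs l2 + 1). intros n Hn.
  destruct (Nat.Even_or_Odd n) as [[k Hk]|[k Hk]]; subst n.
  - specialize (H2 k ltac:(lia)). unfold R_dist in H2.
    pose proof (Rabs_triang_inv (u (2 * k)%nat) l2). pose proof (Rabs_pos l1). lra.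
  - specialize (H1 k ltac:(lia)). unfold R_dist in H1.
    pose proof (Rabs_triang_inv (u (2 * k + 1)%nat) l1). pose proof (Rabs_pos l2). lra.
Qed.

Lemma sum_tele (U : nat -> R) n : sum_f_R0 (fun j => U (S j) - U j) n = U (S n) - U 0%nat.
Proof. induction n. simpl; ring. rewrite tech5, IHn. ring. Qed.

Lemma Rabs_def2b x B : Rabs x <= B -> - B <= x <= B.
Proof. unfold Rabs. destruct (Rcase_abs x); intros; lra. Qed.

Lemma engine (U x g P : nat -> R) (c xo xe Go Ge W : R) :
  U 0%nat = 0 ->
  (forall j, U (S (S j)) - U (S j) <= U (S j) - U j) ->
  Un_cv (fun j => U (S j) - U j) 0 ->
  (forall Y, exists N, forall n, (N <= n)%nat -> Y <= U n) ->
  Un_cv (sum_f_R0 (tg_alt (fun j => U (S j) - U j))) W ->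
  c <> 0 ->
  (forall n, x (S n) = P n - c * conv (fun j => U (S j)) g n) ->
  Un_cv (fun n => P (S (S n)) - 2 * P (S n) + P n) 0 ->
  (exists BP, forall n, Rabs (P (S n) - P n) <= BP) ->
  Un_cv (fun m => x (2 * m + 1)%nat) xo -> Un_cv (fun m => x (2 * m)%nat) xe ->
  Un_cv (fun m => g (2 * m + 1)%nat) Go -> Un_cv (fun m => g (2 * m)%nat) Ge ->
  Go + Ge = 0 /\ xo - xe = c * W / 2 * (Go - Ge).
Proof.
  intros HU0 Hm Hd Hinf HW Hc Hx HP2 [BP HBP] Hxo Hxe Hgo Hge.
  set (d := fun j => U (S j) - U j) in *.
  assert (Hd0 := noninc_nonneg d Hm Hd).
  assert (Hdg := noninc_gen d Hm).
  assert (Hconv : forall n, conv (fun j => U (S j)) g (S n) - conv (fun j => U (S j)) g n = conv d g (S n)).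
  { intros n. rewrite conv_diff. apply conv_ext. intros [|j]; simpl; unfold d; auto. rewrite HU0; ring. }
  assert (HA : forall n, x (S (S n)) - x (S n) = (P (S n) - P n) - c * conv d g (S n)).
  { intros n. rewrite !Hx, <- Hconv. ring. }
  split.
  -
    set (s := fun k => g (S k) + g k).
    assert (Hs : Un_cv s (Go + Ge)).
    { apply cv_parity.
      - apply (cv_ext (fun m => g (2 * m + 1)%nat + g (2 * m)%nat)).
        { intros m. unfold s. f_equal. f_equal. lia. }
        apply CV_plus; auto.
      - replace (Go + Ge) with (Ge + Go) by ring.
        apply (cv_ext (fun m => g (2 * (S m))%nat + g (2 * m + 1)%nat)).
        { intros m. unfold s. f_equal. f_equal. lia. }
        apply CV_plus; auto.
        apply (cv_sub (fun m => g (2 * m)%nat) S); auto. }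
    assert (Hid : forall n, sum_f_R0 (fun j => d j * s (n - j)%nat) n = conv d g (S n) + conv d g n - d (S n) * g 0%nat).
    { intros n. unfold conv. rewrite tech5. rewrite Nat.sub_diag.
      assert (sum_f_R0 (fun j => d j * g (S n - j)%nat) n = sum_f_R0 (fun j => d j * g (S (n - j))%nat) n).
      { apply sum_eq. intros j Hj. rewrite Nat.sub_succ_l by auto. auto. }
      rewrite H. unfold s.
      assert (E : sum_f_R0 (fun j => d j * (g (S (n - j)) + g (n - j)%nat)) n =
        sum_f_R0 (fun j => d j * g (S (n - j))) n + sum_f_R0 (fun j => d j * g (n - j)%nat) n).
      { rewrite <- plus_sum. apply sum_eq. intros; ring. }
      rewrite E. ring. }
    destruct (ev_bound x xo xe Hxo Hxe) as [N [Bx HBx]].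
    set (BA := (BP + 2 * Bx) / Rabs c).
    assert (HcA : 0 < Rabs c) by (apply Rabs_pos_lt; auto).
    assert (HAb : forall n, (N <= n)%nat -> Rabs (conv d g (S n)) <= BA).
    { intros n Hn. unfold BA. apply (Rmult_le_reg_l (Rabs c)); auto.
      replace (Rabs c * ((BP + 2 * Bx) / Rabs c)) with (BP + 2 * Bx) by (field; lra).
      rewrite <- Rabs_mult.
      replace (c * conv d g (S n)) with ((P (S n) - P n) - (x (S (S n)) - x (S n))) by (rewrite HA; ring).
      eapply Rle_trans. apply Rabs_triang. rewrite Rabs_Ropp.
      pose proof (HBP n). eapply Rle_trans. apply Rplus_le_compat_l. apply Rabs_triang. rewrite Rabs_Ropp.
      pose proof (HBx (S (S n)) ltac:(lia)). pose proof (HBx (S n) ltac:(lia)). lra. }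
    set (B := 2 * BA + d 0%nat * Rabs (g 0%nat)).
    assert (HSb : forall n, (S N <= n)%nat -> Rabs (sum_f_R0 (fun j => d j * s (n - j)%nat) n) <= B).
    { intros n Hn. rewrite Hid. unfold B.
      destruct n as [|n']. lia.
      pose proof (HAb (S n') ltac:(lia)). pose proof (HAb n' ltac:(lia)).
      assert (Rabs (d (S (S n')) * g 0%nat) <= d 0%nat * Rabs (g 0%nat)).
      { rewrite Rabs_mult. rewrite Rabs_right by (apply Rle_ge; auto).
        apply Rmult_le_compat_r. apply Rabs_pos. apply Hdg; lia. }
      pose proof (Rabs_triang (conv d g (S (S n')) + conv d g (S n')) (- (d (S (S n')) * g 0%nat))).
      pose proof (Rabs_triang (conv d g (S (S n'))) (conv d g (S n'))).
      rewrite Rabs_Ropp in H2. 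
      replace (conv d g (S (S n')) + conv d g (S n') - d (S (S n')) * g 0%nat) with
        (conv d g (S (S n')) + conv d g (S n') + - (d (S (S n')) * g 0%nat)) by ring.
      lra. }
    assert (Hun : forall Y, exists N0, forall n, (N0 <= n)%nat -> Y <= sum_f_R0 d n).
    { intros Y. destruct (Hinf Y) as [N0 HN0]. exists N0. intros n Hn.
      unfold d. rewrite sum_tele, HU0. rewrite Rminus_0_r. apply HN0. lia. }
    assert (Hle : Go + Ge <= 0).
    { apply (core1 d s (d 0%nat) (Go + Ge) B (S N)); auto.
      intros j; apply Hdg; lia.
      intros n Hn. specialize (HSb n Hn). apply Rabs_def2b in HSb. lra. }
    assert (Hge' : - (Go + Ge) <= 0).
    { apply (core1 d (fun k => - s k) (d 0%nat) (- (Go + Ge)) B (S N)); auto.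
      intros j; apply Hdg; lia.
      apply CV_opp. auto.
      intros n Hn. specialize (HSb n Hn). apply Rabs_def2b in HSb.
      replace (sum_f_R0 (fun j => d j * - s (n - j)%nat) n) with (- sum_f_R0 (fun j => d j * s (n - j)%nat) n).
      lra. rewrite <- (Rmult_1_l (sum_f_R0 (fun j : nat => d j * s (n - j)%nat) n)).
      rewrite Ropp_mult_distr_l. rewrite scal_sum. apply sum_eq. intros; ring. }
    lra.
  -
    assert (HB2 : forall n, conv d g (S (S n)) - conv d g (S n) = conv (dif d) g (S (S n))) by (intros; apply conv_diff).
    set (y := fun m => x (S (S (S (2 * m)))) - 2 * x (S (S (2 * m))) + x (S (2 * m))).
    assert (Hy1 : Un_cv y (xo - 2 * xe + xo)).
    { apply CV_plus. apply CV_minus.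
      - apply (cv_ext (fun m => x (2 * S m + 1)%nat)). { intros m. f_equal. lia. }
        apply (cv_sub (fun m => x (2 * m + 1)%nat) S); auto.
      - apply CV_mult. apply cv_const.
        apply (cv_ext (fun m => x (2 * S m)%nat)). { intros m. f_equal. lia. }
        apply (cv_sub (fun m => x (2 * m)%nat) S); auto.
      - apply (cv_ext (fun m => x (2 * m + 1)%nat)). { intros m. f_equal. lia. } auto. }
    assert (Hy2 : Un_cv y (0 - c * ((Ge - Go) * W))).
    { apply (cv_ext (fun m => (P (S (S (2 * m))) - 2 * P (S (2 * m)) + P (2 * m)%nat)
                               - c * conv (dif d) g (2 * m + 2)%nat)).
      { intros m. unfold y. 
        replace (2 * m + 2)%nat with (S (S (2 * m))) by lia.
        rewrite <- HB2.
        pose proof (HA (S (2 * m))). pose proof (HA (2 * m)%nat). lra. }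
      apply CV_minus.
      - apply (cv_sub (fun n => P (S (S n)) - 2 * P (S n) + P n) (fun m => 2 * m)%nat); auto. intros; lia.
      - apply CV_mult. apply cv_const. apply core2; auto. }
    assert (E := UL_sequence _ _ _ Hy1 Hy2).
    field_simplify. lra.
Qed.

Definition Ur (b : R) (n : nat) := match n with O => 0 | S _ => Rpower (INR n) b end.

Lemma rp_conc b t : 0 < b < 1 -> 0 < t ->
  Rpower (t + 2) b - Rpower (t + 1) b <= Rpower (t + 1) b - Rpower t b.
Proof.
  intros Hb Ht.
  assert (Hder : forall c, 0 < c -> derivable_pt_lim (fun x => Rpower x b) c (b * Rpower c (b - 1))).
  { intros c Hc. apply derivable_pt_lim_power; auto. }
  destruct (MVT_cor2 (fun x => Rpower x b) (fun x => b * Rpower x (b - 1)) t (t + 1)) as [xi [Hxi Hxi2]].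
  lra. intros c Hc. apply Hder. lra.
  destruct (MVT_cor2 (fun x => Rpower x b) (fun x => b * Rpower x (b - 1)) (t + 1) (t + 2)) as [eta [Het Het2]].
  lra. intros c Hc. apply Hder. lra.
  replace (t + 2 - (t + 1)) with 1 in Het by ring.
  replace (t + 1 - t) with 1 in Hxi by ring.
  rewrite Het, Hxi. rewrite !Rmult_1_r. apply Rmult_le_compat_l. lra.
  unfold Rpower. apply exp_le. assert (ln xi < ln eta) by (apply ln_increasing; lra). nra.
Qed.

Lemma Ur_1 b : Ur b 1 = 1.
Proof. unfold Ur. simpl. unfold Rpower. rewrite ln_1, Rmult_0_r. apply exp_0. Qed.

Lemma Ur_S b k : Ur b (S k) = Rpower (INR k + 1) b.
Proof. unfold Ur. rewrite S_INR. auto. Qed.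

Lemma Ur_dec b : 0 < b < 1 -> forall j, Ur b (S (S j)) - Ur b (S j) <= Ur b (S j) - Ur b j.
Proof.
  intros Hb [|i].
  - rewrite Ur_1. rewrite Ur_S. simpl. replace (1 + 1) with 2 by ring.
    pose proof (rp_let b 2 ltac:(lra) ltac:(lra)). lra.
  - rewrite !Ur_S. rewrite !S_INR. pose proof (pos_INR i).
    pose proof (rp_conc b (INR i + 1) Hb ltac:(lra)).
    replace (INR i + 1 + 1 + 1) with (INR i + 1 + 2) by ring. lra.
Qed.

Lemma Ur_inc b : 0 < b < 1 -> forall j, 0 <= Ur b (S j) - Ur b j.
Proof.
  intros Hb [|i].
  - rewrite Ur_1. simpl. lra.
  - rewrite !Ur_S. rewrite S_INR. pose proof (pos_INR i).
    assert (Rpower (INR i + 1) b <= Rpower (INR i + 1 + 1) b) by (apply Rle_Rpower_l; lra). lra.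
Qed.

Lemma big_nat A : exists N : nat, A < INR N.
Proof. destruct (INR_archimed 1 A) as [n Hn]. lra. exists n. lra. Qed.

Lemma Ur_dlim b : 0 < b < 1 -> Un_cv (fun j => Ur b (S j) - Ur b j) 0.
Proof.
  intros Hb eps Heps.
  destruct (big_nat (exp (ln eps / (b - 1)))) as [N HN].
  exists (S N). intros n Hn. unfold R_dist. rewrite Rminus_0_r.
  rewrite Rabs_right by (apply Rle_ge, Ur_inc; auto).
  destruct n as [|i]. lia.
  rewrite !Ur_S. rewrite S_INR. pose proof (pos_INR i).
  destruct (MVT_cor2 (fun x => Rpower x b) (fun x => b * Rpower x (b - 1)) (INR i + 1) (INR i + 1 + 1)) as [xi [Hxi Hxi2]].
  lra. intros c Hc. apply derivable_pt_lim_power. lra.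
  rewrite Hxi. replace (INR i + 1 + 1 - (INR i + 1)) with 1 by ring. rewrite Rmult_1_r.
  assert (INR N <= INR i) by (apply le_INR; lia).
  assert (Hl : ln eps / (b - 1) < ln xi).
  { rewrite <- (ln_exp (ln eps / (b - 1))). apply ln_increasing. apply exp_pos. lra. }
  assert (Hl2 : (b - 1) * ln xi < ln eps).
  { apply (Rmult_lt_compat_l (1 - b)) in Hl; [|lra].
    replace ((1 - b) * (ln eps / (b - 1))) with (- ln eps) in Hl by (field; lra). lra. }
  assert (Rpower xi (b - 1) < eps).
  { unfold Rpower. rewrite <- (exp_ln eps) by lra. apply exp_increasing. lra. }
  assert (0 < Rpower xi (b - 1)) by (unfold Rpower; apply exp_pos). nra.
Qed.

Lemma Ur_inf b : 0 < b < 1 -> forall Y, exists N, forall n, (N <= n)%nat -> Y <= Ur b n.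
Proof.
  intros Hb Y. destruct (big_nat (exp (Y / b))) as [N HN].
  exists N. intros n Hn. pose proof (exp_pos (Y / b)).
  assert (HnN : INR N <= INR n) by (apply le_INR; lia).
  destruct n as [|k]. { simpl in HnN. lra. }
  unfold Ur. unfold Rpower.
  assert (Y / b < ln (INR (S k))).
  { rewrite <- (ln_exp (Y / b)). apply ln_increasing; lra. }
  pose proof (exp_ineq1_le (b * ln (INR (S k)))).
  assert (Y <= b * ln (INR (S k))).
  { apply (Rmult_lt_compat_l b) in H0; [|lra]. replace (b * (Y / b)) with Y in H0 by (field; lra). lra. }
  lra.
Qed.

Fixpoint Hs (k : nat) : R := match k with O => 0 | S k => Hs k + / (2 + INR k) end.

Lemma Hs_exp k : (INR k + 2) / 2 <= exp (Hs k).
Proof.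
  induction k.
  - simpl. rewrite exp_0. lra.
  - simpl Hs. rewrite exp_plus. pose proof (pos_INR k).
    pose proof (exp_ineq1_le (/ (2 + INR k))).
    assert (0 < / (2 + INR k)) by (apply Rinv_0_lt_compat; lra).
    rewrite S_INR. apply Rle_trans with ((INR k + 2) / 2 * (1 + / (2 + INR k))).
    + right. field. lra.
    + apply Rmult_le_compat; lra.
Qed.

Lemma Hs_nonneg k : 0 <= Hs k.
Proof. induction k. simpl; lra. simpl. pose proof (pos_INR k).
  assert (0 < / (2 + INR k)) by (apply Rinv_0_lt_compat; lra). lra. Qed.

Lemma Hs_unb M : exists N, forall k, (N <= k)%nat -> M <= Hs k.
Proof.
  destruct (big_nat (2 * exp M)) as [N HN]. exists N. intros k Hk.
  assert (INR N <= INR k) by (apply le_INR; lia).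
  pose proof (Hs_exp k). apply Rnot_lt_le. intros Hc.
  assert (exp (Hs k) < exp M) by (apply exp_increasing; auto). lra.
Qed.

Definition Ug (V : nat -> R) (n : nat) := match n with O => 0 | S k => V k end.

Lemma V_pos (a : R) (V : nat -> R) (Ha : 1 < a < 2) (HV0 : 0 < V 0%nat) (HVS : forall k, V (S k) = V k * (a + INR k) / (1 + INR k)) k : 0 < V k.
Proof. induction k; auto. rewrite HVS. pose proof (pos_INR k).
  apply Rdiv_lt_0_compat; [apply Rmult_lt_0_compat|]; lra. Qed.

Lemma V_diff (a : R) (V : nat -> R) (Ha : 1 < a < 2) (HV0 : 0 < V 0%nat) (HVS : forall k, V (S k) = V k * (a + INR k) / (1 + INR k)) k : V (S k) - V k = V k * (a - 1) / (1 + INR k).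
Proof. rewrite HVS. pose proof (pos_INR k). field. lra. Qed.

Lemma V_ge0 (a : R) (V : nat -> R) (Ha : 1 < a < 2) (HV0 : 0 < V 0%nat) (HVS : forall k, V (S k) = V k * (a + INR k) / (1 + INR k)) k : V 0%nat <= V k.
Proof. induction k. lra. pose proof ((V_diff a V Ha HV0 HVS) k). pose proof ((V_pos a V Ha HV0 HVS) k). pose proof (pos_INR k).
  assert (0 <= V k * (a - 1) / (1 + INR k)) by (apply Rdiv_le_0_compat; nra). lra. Qed.

Lemma Ug_dec (a : R) (V : nat -> R) (Ha : 1 < a < 2) (HV0 : 0 < V 0%nat) (HVS : forall k, V (S k) = V k * (a + INR k) / (1 + INR k)) j : Ug V (S (S j)) - Ug V (S j) <= Ug V (S j) - Ug V j.
Proof.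
  destruct j as [|k]; simpl Ug.
  - rewrite (V_diff a V Ha HV0 HVS). simpl. replace (1 + 0) with 1 by ring. nra.
  - rewrite !(V_diff a V Ha HV0 HVS). rewrite HVS. rewrite S_INR. pose proof (pos_INR k). pose proof ((V_pos a V Ha HV0 HVS) k).
    set (q := V k * (a - 1) / (1 + INR k)).
    assert (0 <= q) by (unfold q; apply Rdiv_le_0_compat; nra).
    replace (V k * (a + INR k) / (1 + INR k) * (a - 1) / (1 + (INR k + 1))) with
      (q * ((a + INR k) / (2 + INR k))) by (unfold q; field; lra).
    assert ((a + INR k) / (2 + INR k) <= 1).
    { apply (Rmult_le_reg_r (2 + INR k)). lra. unfold Rdiv. rewrite Rmult_assoc, Rinv_l by lra. lra. }
    nra.
Qed.

Lemma Ug_dlim (a : R) (V : nat -> R) (Ha : 1 < a < 2) (HV0 : 0 < V 0%nat) (HVS : forall k, V (S k) = V k * (a + INR k) / (1 + INR k)) : Un_cv (fun j => Ug V (S j) - Ug V j) 0.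
Proof.
  set (Z := fun k => V k / (1 + INR k)).
  set (g := 2 - a).
  assert (HZ : forall k, Z k * (1 + g * Hs k) <= Z 0%nat).
  { induction k.
    - simpl. lra.
    - assert (E : Z (S k) = Z k * (1 - g / (2 + INR k))).
      { unfold Z. rewrite HVS, S_INR. pose proof (pos_INR k). unfold g. field. lra. }
      rewrite E. simpl Hs. pose proof (pos_INR k). pose proof (Hs_nonneg k).
      set (u := g / (2 + INR k)).
      assert (0 < u < 1).
      { unfold u, g. split. apply Rdiv_lt_0_compat; lra.
        apply (Rmult_lt_reg_r (2 + INR k)). lra. unfold Rdiv. rewrite Rmult_assoc, Rinv_l by lra. lra. }
      replace (1 + g * (Hs k + / (2 + INR k))) with (1 + g * Hs k + u) by (unfold u; field; lra).
      assert (0 <= Z k) by (unfold Z; apply Rdiv_le_0_compat; [left; apply (V_pos a V Ha HV0 HVS)|lra]).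
      assert (0 <= g * Hs k) by (unfold g; nra).
      assert (Z k * (1 - u) * (1 + g * Hs k + u) <= Z k * (1 + g * Hs k)).
      { assert (0 <= Z k * (u * (g * Hs k) + u * u)) by (apply Rmult_le_pos; nra).
        replace (Z k * (1 - u) * (1 + g * Hs k + u)) with
          (Z k * (1 + g * Hs k) - Z k * (u * (g * Hs k) + u * u)) by ring. lra. }
      lra. }
  intros eps Heps.
  assert (HZ0 : 0 < Z 0%nat) by (unfold Z; simpl; apply Rdiv_lt_0_compat; lra).
  destruct (Hs_unb (Z 0%nat / (g * eps))) as [N HN].
  exists (S N). intros n Hn. destruct n as [|k]. lia.
  simpl Ug. rewrite (V_diff a V Ha HV0 HVS). unfold R_dist. rewrite Rminus_0_r.
  assert (Hk := HZ k). assert (HM := HN k ltac:(lia)).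
  pose proof ((V_pos a V Ha HV0 HVS) k). pose proof (pos_INR k).
  assert (0 < g) by (unfold g; lra).
  assert (HZk : 0 <= Z k) by (unfold Z; apply Rdiv_le_0_compat; lra).
  assert (Z k * (1 + g * (Z 0%nat / (g * eps))) <= Z 0%nat).
  { eapply Rle_trans; [|exact Hk]. apply Rmult_le_compat_l; auto.
    apply Rplus_le_compat_l. apply Rmult_le_compat_l; lra. }
  replace (1 + g * (Z 0%nat / (g * eps))) with (1 + Z 0%nat / eps) in H2 by (field; lra).
  assert (Z k < eps).
  { apply Rnot_le_lt. intros Hc.
    assert (eps * (1 + Z 0%nat / eps) <= Z k * (1 + Z 0%nat / eps)).
    { apply Rmult_le_compat_r; auto. assert (0 <= Z 0%nat / eps) by (apply Rdiv_le_0_compat; lra). lra. }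
    replace (eps * (1 + Z 0%nat / eps)) with (eps + Z 0%nat) in H3 by (field; lra). lra. }
  replace (V k * (a - 1) / (1 + INR k)) with ((a - 1) * Z k) by (unfold Z; field; lra).
  rewrite Rabs_right by nra. nra.
Qed.

Lemma Ug_inf (a : R) (V : nat -> R) (Ha : 1 < a < 2) (HV0 : 0 < V 0%nat) (HVS : forall k, V (S k) = V k * (a + INR k) / (1 + INR k)) : forall Y, exists N, forall n, (N <= n)%nat -> Y <= Ug V n.
Proof.
  assert (HL : forall k, V 0%nat * (1 + (a - 1) * Hs k) <= V k).
  { induction k.
    - simpl. lra.
    - simpl Hs. pose proof ((V_diff a V Ha HV0 HVS) k). pose proof ((V_ge0 a V Ha HV0 HVS) k). pose proof (pos_INR k).
      assert (V 0%nat * (a - 1) * / (2 + INR k) <= V k * (a - 1) / (1 + INR k)).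
      { unfold Rdiv. rewrite Rmult_assoc. rewrite (Rmult_assoc (V k)).
        apply Rmult_le_compat; try lra.
        assert (0 < / (2 + INR k)) by (apply Rinv_0_lt_compat; lra). nra.
        apply Rmult_le_compat_l. lra. apply Rinv_le_contravar; lra. }
      nra. }
  intros Y. destruct (Hs_unb (Rabs Y / (V 0%nat * (a - 1)))) as [N HN].
  exists (S N). intros n Hn. destruct n as [|k]. lia. simpl Ug.
  specialize (HL k). specialize (HN k ltac:(lia)).
  assert (V 0%nat * (a - 1) * (Rabs Y / (V 0%nat * (a - 1))) <= V 0%nat * (a - 1) * Hs k)
    by (apply Rmult_le_compat_l; nra).
  replace (V 0%nat * (a - 1) * (Rabs Y / (V 0%nat * (a - 1)))) with (Rabs Y) in H by (field; nra).
  pose proof (Rle_abs Y). nra.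
Qed.


Lemma W_cv (d : nat -> R) : (forall j, d (S j) <= d j) -> Un_cv d 0 ->
  Un_cv (sum_f_R0 (tg_alt d)) (Series (fun m => (-1) ^ (m + 2) * d m)).
Proof.
  intros Hm Hd. destruct (alternated_series d Hm Hd) as [l Hl].
  replace (Series (fun m => (-1) ^ (m + 2) * d m)) with l; auto.
  symmetry. apply is_series_unique. apply (is_series_ext (tg_alt d)).
  { intros n. unfold tg_alt. rewrite pow_add. simpl. ring. }
  apply is_series_Reals. exact Hl.
Qed.

Definition Uprops (U : nat -> R) :=
  U 0%nat = 0 /\ (forall j, U (S (S j)) - U (S j) <= U (S j) - U j) /\
  Un_cv (fun j => U (S j) - U j) 0 /\ (forall Y, exists N, forall n, (N <= n)%nat -> Y <= U n).

Lemma Uprops_ext U1 U2 : (forall n, U1 n = U2 n) -> Uprops U1 -> Uprops U2.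
Proof.
  intros E [H0 [H1 [H2 H3]]]. unfold Uprops. repeat split.
  - rewrite <- E; auto.
  - intros j. repeat rewrite <- E. auto.
  - apply (cv_ext (fun j => U1 (S j) - U1 j)); auto. intros; repeat rewrite E; auto.
  - intros Y; destruct (H3 Y) as [N HN]; exists N; intros; rewrite <- E; auto.
Qed.

Lemma fsum_gen f s n : fold_right Rplus 0 (map f (seq s (S n))) = sum_f_R0 (fun k => f (s + k)%nat) n.
Proof.
  revert s. induction n; intros s.
  - simpl. rewrite Nat.add_0_r. ring.
  - change (fold_right Rplus 0 (map f (seq s (S (S n))))) with (f s + fold_right Rplus 0 (map f (seq (S s) (S n)))).
    rewrite IHn. rewrite sum_shift. rewrite Nat.add_0_r. f_equal. apply sum_eq. intros i _. f_equal. lia.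
Qed.

Lemma fsum_S f n : fsum (S n) f = sum_f_R0 f n.
Proof. unfold fsum. rewrite fsum_gen. apply sum_eq. intros; auto. Qed.

Lemma cv_ext_ev (u v : nat -> R) l N : (forall n, (N <= n)%nat -> u n = v n) -> Un_cv u l -> Un_cv v l.
Proof. intros H Hu e He. destruct (Hu e He) as [M HM]. exists (max M N). intros n Hn.
  rewrite <- H by lia. apply HM. lia. Qed.

Lemma main_gen (Uv x g P : nat -> R) (c xo xe Go Ge : R) :
  Uprops Uv -> c <> 0 ->
  (forall n, x (S n) = P n - c * conv (fun j => Uv (S j)) g n) ->
  Un_cv (fun n => P (S (S n)) - 2 * P (S n) + P n) 0 ->
  (exists BP, forall n, Rabs (P (S n) - P n) <= BP) ->
  Un_cv (fun m => x (2 * m + 1)%nat) xo -> Un_cv (fun m => x (2 * m)%nat) xe ->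
  Un_cv (fun m => g (2 * m + 1)%nat) Go -> Un_cv (fun m => g (2 * m)%nat) Ge ->
  Go + Ge = 0 /\ xo - xe = c * Series (fun m => (-1) ^ (m + 2) * (Uv (S m) - Uv m)) / 2 * (Go - Ge).
Proof.
  intros [H0 [H1 [H2 H3]]] Hc Hx HP2 HP1 Hxo Hxe Hgo Hge.
  eapply engine; eauto.
  apply (W_cv (fun j => Uv (S j) - Uv j)); auto.
Qed.

Lemma P_lin p0 p1 : Un_cv (fun n => (p0 + p1 * INR (S (S (S n)))) - 2 * (p0 + p1 * INR (S (S n))) + (p0 + p1 * INR (S n))) 0
  /\ exists BP, forall n, Rabs ((p0 + p1 * INR (S (S n))) - (p0 + p1 * INR (S n))) <= BP.
Proof.
  split.
  - apply (cv_ext (fun _ => 0)). intros n. rewrite !S_INR. ring. apply cv_const.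
  - exists (Rabs p1). intros n. right. f_equal. rewrite !S_INR. ring.
Qed.

Lemma Uprops_Ur b : 0 < b < 1 -> Uprops (Ur b).
Proof. intros Hb. repeat split. apply Ur_dec; auto. apply Ur_dlim; auto. apply Ur_inf; auto. Qed.

Lemma Gamma_alpha_pos alpha : 1 < alpha < 2 -> 0 < Gamma alpha.
Proof. intros H. pose proof (Gamma_pos alpha 0 ltac:(lra)). simpl INR in H0. rewrite Rplus_0_r in H0. auto. Qed.

Lemma finish alpha h K (G : R -> R) xo xe :
  1 < alpha < 2 -> 
  G xo + G xe = 0 /\ xo - xe = Rpower h alpha / Gamma alpha * W_tilde K alpha / 2 * (G xo - G xe) ->
  G xo + G xe = 0 /\ xo - xe = W_tilde K alpha / (2 * Gamma alpha) * Rpower h alpha * (G xo - G xe).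
Proof.
  intros Ha [H1 H2]. split; auto. rewrite H2. pose proof (Gamma_alpha_pos alpha Ha). field. lra.
Qed.

Lemma c_nz alpha h : 1 < alpha < 2 -> 0 < h -> Rpower h alpha / Gamma alpha <> 0.
Proof.
  intros Ha Hh. pose proof (Gamma_alpha_pos alpha Ha).
  assert (0 < Rpower h alpha) by (unfold Rpower; apply exp_pos).
  assert (0 < Rpower h alpha / Gamma alpha) by (apply Rdiv_lt_0_compat; auto). lra.
Qed.

Lemma case_a alpha h G x xo xe b0 b1 :
  1 < alpha < 2 -> 0 < h -> continuity G -> caputo_map alpha h b0 b1 G x ->
  Un_cv (fun m => x (2 * m + 1)%nat) xo -> Un_cv (fun m => x (2 * m)%nat) xe ->
  G xo + G xe = 0 /\ xo - xe = Rpower h alpha / Gamma alpha * W_tilde CaputoMap alpha / 2 * (G xo - G xe).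
Proof.
  intros Ha Hh HG Hx Hxo Hxe.
  destruct (P_lin b0 (b1 * h)) as [HP2 HP1].
  apply (main_gen (U CaputoMap alpha) x (fun k => G (x k)) (fun n => b0 + b1 * h * INR (S n))).
  - apply (Uprops_ext (Ur (alpha - 1))). intros [|n]; reflexivity. apply Uprops_Ur; lra.
  - apply c_nz; auto.
  - intros n. rewrite Hx. f_equal. f_equal. rewrite fsum_S, sum_rev. unfold conv. apply sum_eq.
    intros j Hj. replace (n - (n - j) + 1)%nat with (S j) by lia.
    change (U CaputoMap alpha (S j)) with (Rpower (INR (S j)) (alpha - 1)). ring.
  - exact HP2.
  - exact HP1.
  - auto.
  - auto.
  - apply continuity_seq; auto.
  - apply continuity_seq; auto.
Qed.

Lemma case_c alpha h G x xo xe c1 :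
  1 < alpha < 2 -> 0 < h -> continuity G -> rl_map alpha h c1 G x ->
  Un_cv (fun m => x (2 * m + 1)%nat) xo -> Un_cv (fun m => x (2 * m)%nat) xe ->
  G xo + G xe = 0 /\ xo - xe = Rpower h alpha / Gamma alpha * W_tilde RLMap alpha / 2 * (G xo - G xe).
Proof.
  intros Ha Hh HG Hx Hxo Hxe.
  set (b := alpha - 1).
  assert (Hb : 0 < b < 1) by (unfold b; lra).
  set (Kc := c1 / Gamma alpha * Rpower h b).
  assert (HU := Uprops_Ur b Hb). destruct HU as [HU0 [HUd [HUl HUi]]].
  set (d := fun j => Ur b (S j) - Ur b j) in *.
  assert (Hd0 := noninc_nonneg d HUd HUl).
  assert (Hdg := noninc_gen d HUd).
  apply (main_gen (U RLMap alpha) x (fun k => G (x k)) (fun n => Kc * Ur b (S n))).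
  - apply (Uprops_ext (Ur b)). intros [|n]; reflexivity. apply Uprops_Ur; lra.
  - apply c_nz; auto.
  - intros n. rewrite Hx by lia. f_equal.
    + unfold Kc. rewrite Rmult_assoc. f_equal. unfold Ur. rewrite Rmult_comm.
      symmetry. apply Rpower_mult_distr; auto. apply lt_0_INR; lia.
    + f_equal. rewrite fsum_S, sum_rev. unfold conv. apply sum_eq.
      intros j Hj. replace (S n - (n - j))%nat with (S j) by lia. reflexivity.
  - apply (cv_ext (fun n => Kc * (d (S (S n)) - d (S n)))).
    { intros n. unfold d. ring. }
    replace 0 with (Kc * (0 - 0)) by ring. apply CV_mult. apply cv_const. apply CV_minus.
    apply (cv_sub d (fun n => S (S n))); auto. 
    apply (cv_sub d S); auto.
  - exists (Rabs Kc * d 0%nat). intros n.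
    replace (Kc * Ur b (S (S n)) - Kc * Ur b (S n)) with (Kc * d (S n)) by (unfold d; ring).
    rewrite Rabs_mult. apply Rmult_le_compat_l. apply Rabs_pos.
    rewrite Rabs_right by (apply Rle_ge; auto). apply Hdg; lia.
  - auto.
  - auto.
  - apply continuity_seq; auto.
  - apply continuity_seq; auto.
Qed.

Lemma case_b alpha h G x xo xe c0 c1 :
  1 < alpha < 2 -> 0 < h -> continuity G -> hdiff_map alpha h c0 c1 G x ->
  Un_cv (fun m => x (2 * m + 1)%nat) xo -> Un_cv (fun m => x (2 * m)%nat) xe ->
  G xo + G xe = 0 /\ xo - xe = Rpower h alpha / Gamma alpha * W_tilde HDiffMap alpha / 2 * (G xo - G xe).
Proof.
  intros Ha Hh HG Hx Hxo Hxe.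
  destruct (P_lin c0 (c1 * h)) as [HP2 HP1].
  set (V := fun k => Gamma (alpha + INR k) / Gamma (1 + INR k)).
  assert (HV0 : 0 < V 0%nat).
  { unfold V. apply Rdiv_lt_0_compat; apply Gamma_pos; lra. }
  assert (HVS : forall k, V (S k) = V k * (alpha + INR k) / (1 + INR k)).
  { intros k. unfold V. rewrite (Gamma_rec alpha k) by lra. rewrite (Gamma_rec 1 k) by lra.
    pose proof (Gamma_pos alpha k ltac:(lra)). pose proof (Gamma_pos 1 k ltac:(lra)).
    pose proof (pos_INR k). field. lra. }
  set (g := fun k => match k with O => 0 | S _ => G (x k) end).
  apply (main_gen (U HDiffMap alpha) x g (fun n => c0 + c1 * h * INR (S n))).
  - apply (Uprops_ext (Ug V)).
    { intros [|k]. reflexivity. simpl Ug. unfold V. change (U HDiffMap alpha (S k)) with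
        (Gamma (INR (S k) + alpha - 1) / Gamma (INR (S k))).
      rewrite S_INR. f_equal; f_equal; ring. }
    repeat split.
    + apply (Ug_dec alpha V); auto.
    + apply (Ug_dlim alpha V); auto.
    + apply (Ug_inf alpha V); auto.
  - apply c_nz; auto.
  - intros n. rewrite Hx. f_equal. f_equal. destruct n as [|m].
    + unfold fsum, conv. simpl. unfold g. ring.
    + rewrite fsum_S, sum_rev. unfold conv. rewrite tech5. rewrite Nat.sub_diag.
      unfold g at 2. rewrite Rmult_0_r, Rplus_0_r. apply sum_eq.
      intros j Hj. replace (S m - (m - j))%nat with (S j) by lia.
      replace (S m - j)%nat with (S (m - j)) by lia.
      change (U HDiffMap alpha (S j)) with (Gamma (INR (S j) + alpha - 1) / Gamma (INR (S j))).
      unfold g. replace (INR (S j) - 1 + alpha) with (INR (S j) + alpha - 1) by ring. reflexivity.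
  - exact HP2.
  - exact HP1.
  - auto.
  - auto.
  - apply (cv_ext (fun m => G (x (2 * m + 1)%nat))). 
    { intros m. unfold g. rewrite Nat.add_1_r. reflexivity. }
    apply continuity_seq; auto.
  - apply (cv_ext_ev (fun m => G (x (2 * m)%nat)) _ _ 1).
    { intros m Hm. unfold g. replace (2 * m)%nat with (S (2 * m - 1)) by lia. reflexivity. }
    apply continuity_seq; auto.
Qed.

Theorem mainTheorem2 (K : map_kind) (alpha h : R) (G : R -> R) (x : nat -> R)
    (xo xe : R) :
  1 < alpha < 2 -> 0 < h -> continuity G ->
  is_universal_map K alpha h G x ->
  is_lim_seq (fun n => x (2 * n + 1)%nat) xo ->
  is_lim_seq (fun n => x (2 * n)%nat) xe ->
  G xo + G xe = 0 /\
  xo - xe = W_tilde K alpha / (2 * Gamma alpha) * Rpower h alpha * (G xo - G xe).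
Proof.
  intros Ha Hh HG Hu Hxo Hxe.
  apply is_lim_seq_Reals in Hxo. apply is_lim_seq_Reals in Hxe.
  apply finish; auto.
  destruct K; simpl in Hu.
  - destruct Hu as [b0 [b1 Hx]]. eapply case_a; eauto.
  - destruct Hu as [c0 [c1 Hx]]. eapply case_b; eauto.
  - destruct Hu as [c1 Hx]. eapply case_c; eauto.
Qed.
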